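(* Let $H$ be a real Hilbert space, $t\in(0,1]$ and $b\in(0,1]$. Then for every $m\ge 1$ and every $\alpha$ with $0<\alpha \le \frac{(2-b)t}{(2-b)t+2}$, $$ \gamma_m^{t,b}(\alpha,H) \le \bigl(1+mb(2-b) t^2\bigr)^{-\alpha/2}. $$ Equivalently: for every dictionary $\mathcal D$ of $H$, every $f\in H$, $f\neq 0$, with $\|f\|_{A_1(\mathcal D)}<\infty$, and every realization of the WGA$(t,b)$, $$\|f-G^{t,b}_m(f,\mathcal D)\|\le \|f\|^{1-\alpha}\|f\|_{A_1(\mathcal D)}^{\alpha}\bigl(1+mb(2-b)t^2\bigr)^{-\alpha/2}.$$
   Context: $H$ is a real Hilbert space with inner product $\langle\cdot,\cdot\rangle$ and norm $\|\cdot\|$. A (symmetric) dictionary is a set $\mathcal D\subset H$ with $\|g\|=1$ for all $g\in\mathcal D$, $\overline{\operatorname{span}}\,\mathcal D=H$, and $g\in\mathcal D\Rightarrow -g\in\mathcal D$. $A_1(\mathcal D)$ is the closure of the convex hull of $\mathcal D$, and $\|f\|_{A_1(\mathcal D)}:=\inf\{M: f/M\in A_1(\mathcal D)\}$. Weak Greedy Algorithm with parameter $b$, WGA$(t,b)$: set $f_0:=f$; for $m\ge1$ choose any $\varphi_m\in\mathcal D$ with $\langle f_{m-1},\varphi_m\rangle\ge t\sup_{g\in\mathcal D}\langle f_{m-1},g\rangle$, set $f_m:=f_{m-1}-b\langle f_{m-1},\varphi_m\rangle\varphi_m$ and $G^{t,b}_m(f,\mathcal D):=b\sum_{j=1}^m\langle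 f_{j-1},\varphi_j\rangle\varphi_j$. For $\alpha\in(0,1]$, $$\gamma_m^{t,b}(\alpha,H):=\sup_{\mathcal D}\sup_f\sup_{G^{t,b}_m(f,\mathcal D)}\frac{\|f-G^{t,b}_m(f,\mathcal D)\|}{\|f\|^{1-\alpha}\|f\|_{A_1(\mathcal D)}^{\alpha}},$$ the suprema being over all dictionaries $\mathcal D$, all $f\ne0$ with $\|f\|_{A_1(\mathcal D)}<\infty$, and all possible realizations of the algorithm. *)

(* Defs.v *)
From HB Require Import structures.
From mathcomp Require Import all_boot all_order all_algebra.
From mathcomp Require Import all_classical all_reals all_analysis.
Set Implicit Arguments. Unset Strict Implicit. Unset Printing Implicit Defensive.
Import Order.TTheory GRing.Theory Num.Theory.
Import numFieldNormedType.Exports.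
Local Open Scope classical_set_scope.
Local Open Scope ring_scope.

Section Defs.
Variables (R : realType) (H : completeNormedModType R).

(* ip is a real inner product on H inducing the norm of H:
   symmetric, linear in the first argument, and |x|^2 = <x,x>.
   Together with completeness of H this makes H a real Hilbert space. *)
Definition inner_product (ip : H -> H -> R) : Prop :=
  (forall x y, ip x y = ip y x) /\
  (forall (a : R) x y z, ip (a *: x + y) z = a * ip x z + ip y z) /\
  (forall x, `|x| ^+ 2 = ip x x).

Definition lin_span (D : set H) : set H :=
  [set x | exists (n : nat) (c : 'I_n -> R) (g : 'I_n -> H),
     (forall i, D (g i)) /\ x = \sum_(i < n) c i *: g i].

Definition dictionary (D : set H) : Prop :=
  (forall g, D g -> `|g| = 1) /\
  closure (lin_span D) = setT /\
  (forall g, D g -> D (- g)).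

Definition conv_hull (D : set H) : set H :=
  [set x | exists (n : nat) (c : 'I_n -> R) (g : 'I_n -> H),
     (forall i, 0 <= c i) /\ \sum_(i < n) c i = 1 /\
     (forall i, D (g i)) /\ x = \sum_(i < n) c i *: g i].

Definition A1 (D : set H) : set H := closure (conv_hull D).

Definition A1norm (D : set H) (f : H) : \bar R :=
  ereal_inf [set (M%:E) | M in [set M : R | 0 < M /\ A1 D (M^-1 *: f)]].

(* residuals of the WGA(t,b) driven by the choices phi 1, phi 2, ... :
   wga_res 0 = f,  wga_res j = wga_res (j-1) - b <wga_res (j-1), phi j> phi j *)
Fixpoint wga_res (ip : H -> H -> R) (b : R) (f : H) (phi : nat -> H) (j : nat) : H :=
  match j with
  | 0 => f
  | j'.+1 => wga_res ip b f phi j' - (b * ip (wga_res ip b f phi j') (phi j)) *: phi j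
  end.

Definition wga_approx (ip : H -> H -> R) (b : R) (f : H) (phi : nat -> H) (m : nat) : H :=
  b *: \sum_(1 <= j < m.+1) (ip (wga_res ip b f phi j.-1) (phi j) *: phi j).

Definition wga_realization (ip : H -> H -> R) (t b : R) (D : set H) (f : H)
    (phi : nat -> H) (m : nat) : Prop :=
  forall j : nat, (1 <= j <= m)%N ->
    D (phi j) /\
    ip (wga_res ip b f phi j.-1) (phi j) >=
      t * sup [set ip (wga_res ip b f phi j.-1) g | g in D].

End Defs.

(* Main.v *)
Require Import Defs.
From HB Require Import structures.
From mathcomp Require Import all_boot all_order all_algebra.
From mathcomp Require Import all_classical all_reals all_analysis.
From mathcomp Require Import ring lra.
Set Implicit Arguments. Unset Strict Implicit. Unset Printing Implicit Defensive.
Import Order.TTheory GRing.Theory Num.Theory.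
Import numFieldNormedType.Exports.
Local Open Scope classical_set_scope.
Local Open Scope ring_scope.

Lemma ipC (R : realType) (H : completeNormedModType R) (ip : H -> H -> R) :
  inner_product ip -> forall x y, ip x y = ip y x.
Proof. by case. Qed.

Lemma ipDl (R : realType) (H : completeNormedModType R) (ip : H -> H -> R) :
  inner_product ip -> forall x y z, ip (x + y) z = ip x z + ip y z.
Proof. by case=> _ [hl _] x y z; rewrite -[x]scale1r hl mul1r scale1r. Qed.

Lemma ip0l (R : realType) (H : completeNormedModType R) (ip : H -> H -> R) :
  inner_product ip -> forall z, ip 0 z = 0.
Proof.
move=> hip z; have := ipDl hip 0 0 z; rewrite addr0 => h.
lra.
Qed.

Lemma ipZl (R : realType) (H : completeNormedModType R) (ip : H -> H -> R) :
  inner_product ip -> forall a x z, ip (a *: x) z = a * ip x z.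
Proof.
move=> hip a x z; case: (hip) => _ [hl _].
by have := hl a x 0 z; rewrite addr0 ip0l // addr0.
Qed.

Lemma ipNl (R : realType) (H : completeNormedModType R) (ip : H -> H -> R) :
  inner_product ip -> forall x z, ip (- x) z = - ip x z.
Proof. by move=> hip x z; rewrite -scaleN1r ipZl // mulN1r. Qed.

Lemma ipBl (R : realType) (H : completeNormedModType R) (ip : H -> H -> R) :
  inner_product ip -> forall x y z, ip (x - y) z = ip x z - ip y z.
Proof. by move=> hip x y z; rewrite ipDl // ipNl. Qed.

Lemma ipDr (R : realType) (H : completeNormedModType R) (ip : H -> H -> R) :
  inner_product ip -> forall x y z, ip z (x + y) = ip z x + ip z y.
Proof. by move=> hip x y z; rewrite !(ipC hip z) ipDl. Qed.

Lemma ipZr (R : realType) (H : completeNormedModType R) (ip : H -> H -> R) :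
  inner_product ip -> forall a x z, ip z (a *: x) = a * ip z x.
Proof. by move=> hip a x z; rewrite !(ipC hip z) ipZl. Qed.

Lemma ipNr (R : realType) (H : completeNormedModType R) (ip : H -> H -> R) :
  inner_product ip -> forall x z, ip z (- x) = - ip z x.
Proof. by move=> hip x z; rewrite !(ipC hip z) ipNl. Qed.

Lemma ipBr (R : realType) (H : completeNormedModType R) (ip : H -> H -> R) :
  inner_product ip -> forall x y z, ip z (x - y) = ip z x - ip z y.
Proof. by move=> hip x y z; rewrite ipDr // ipNr. Qed.

Lemma ip0r (R : realType) (H : completeNormedModType R) (ip : H -> H -> R) :
  inner_product ip -> forall z, ip z 0 = 0.
Proof. by move=> hip z; rewrite ipC // ip0l. Qed.

Lemma ipnn (R : realType) (H : completeNormedModType R) (ip : H -> H -> R) :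
  inner_product ip -> forall x, ip x x = `|x| ^+ 2.
Proof. by case=> _ [_ h] x; rewrite h. Qed.

Lemma ip_sumr (R : realType) (H : completeNormedModType R) (ip : H -> H -> R) :
  inner_product ip -> forall h n (F : 'I_n -> H),
  ip h (\sum_(i < n) F i) = \sum_(i < n) ip h (F i).
Proof.
move=> hip h n F.
by apply: (big_morph (ip h) (id1:=0) (op1:=+%R)); [move=> x y; exact: ipDr | exact: ip0r].
Qed.

Lemma ipCS (R : realType) (H : completeNormedModType R) (ip : H -> H -> R) :
  inner_product ip -> forall x y, ip x y <= `|x| * `|y|.
Proof.
move=> hip x y.
have key : 0 <= ip (`|y| *: x - `|x| *: y) (`|y| *: x - `|x| *: y).
  by rewrite (ipnn hip) exprn_ge0.
move: key; rewrite !(ipBl hip) !(ipBr hip) !(ipZl hip) !(ipZr hip) !(ipnn hip) (ipC hip y x).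
have [x0|nx] := eqVneq x 0.
  by move=> _; rewrite x0 (ip0l hip) normr0 mul0r.
have [y0|ny] := eqVneq y 0.
  by move=> _; rewrite y0 (ip0r hip) normr0 mulr0.
have px : 0 < `|x| by rewrite normr_gt0.
have py : 0 < `|y| by rewrite normr_gt0.
set p := ip x y; set a := `|x|; set c := `|y| => key.
have P : 0 < a * c by rewrite mulr_gt0.
have : (a * c) * p <= (a * c) * (a * c) by nra.
by rewrite ler_pM2l.
Qed.


Lemma closure_ub (R : realType) (H : completeNormedModType R) (ip : H -> H -> R)
  (C : set H) h S x :
  inner_product ip -> (forall y, C y -> ip h y <= S) -> closure C x -> ip h x <= S.
Proof.
move=> hip hC cx; rewrite leNgt; apply/negP => lt.
set e := (ip h x - S) / (`|h| + 1).
have e0 : 0 < e by rewrite divr_gt0 ?subr_gt0 // ltr_wpDl.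
have [y [Cy bxy]] := cx _ (nbhsx_ballx x e e0).
move: bxy; rewrite -ball_normE /ball_ /= => bxy.
have := hC _ Cy.
have cs := ipCS hip h (x - y).
rewrite (ipBr hip) in cs.
have : `|h| * `|x - y| <= `|h| * e by rewrite ler_wpM2l // ltW.
have : (`|h| + 1) * e = ip h x - S by rewrite /e mulrC divfK // gt_eqF // ltr_wpDl.
nra.
Qed.

Lemma conv_ub (R : realType) (H : completeNormedModType R) (ip : H -> H -> R)
  (D : set H) h S x :
  inner_product ip -> (forall g, D g -> ip h g <= S) -> conv_hull D x -> ip h x <= S.
Proof.
move=> hip hD [n [c [g [c0 [c1 [Dg ->]]]]]].
rewrite (ip_sumr hip).
under eq_bigr do rewrite (ipZr hip).
apply: (@le_trans _ _ (\sum_(i < n) c i * S)).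
  by apply: ler_sum => i _; rewrite ler_wpM2l // hD.
by rewrite -mulr_suml c1 mul1r.
Qed.

Lemma A1_ub (R : realType) (H : completeNormedModType R) (ip : H -> H -> R)
  (D : set H) f h S :
  inner_product ip -> (A1norm D f < +oo)%E -> (forall g, D g -> ip h g <= S) ->
  0 <= fine (A1norm D f) /\ ip h f <= fine (A1norm D f) * S.
Proof.
move=> hip finA hD.
set E := [set M : R | 0 < M /\ A1 D (M^-1 *: f)].
have lbE : forall M, E M -> (A1norm D f <= M%:E)%E.
  by move=> M EM; apply: ereal_inf_lbound; exists M.
have ge0 : (0 <= A1norm D f)%E.
  by apply: le_ereal_inf_tmp => _ [M [M0 _] <-]; rewrite lee_fin ltW.
have fA : (fine (A1norm D f))%:E = A1norm D f by rewrite fineK // ge0_fin_numE.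
have lbE' : forall M, E M -> fine (A1norm D f) <= M.
  by move=> M EM; rewrite -lee_fin fA lbE.
have hM : forall M, E M -> ip h f <= M * S.
  move=> M [M0 AM].
  have := closure_ub hip (fun y Cy => conv_ub hip hD Cy) AM.
  rewrite (ipZr hip) => le.
  by rewrite -ler_pdivrMl // mulrC.
have [M EM] : E !=set0.
  apply/set0P/negP => /eqP E0; move: finA; rewrite /A1norm -/E E0 image_set0.
  by rewrite ereal_inf0.
split; first by rewrite fine_ge0.
have [S0|S0] := ltP 0 S.
  rewrite -ler_pdivrMr //.
  rewrite -lee_fin fA; apply: le_ereal_inf_tmp => _ [M' EM' <-].
  by rewrite lee_fin ler_pdivrMr // hM.
apply: (le_trans (hM M EM)).
by rewrite ler_wnM2r // lbE'.
Qed.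


Lemma R1 (R : realType) (a B S c t : R) :
  0 < B -> 0 <= a -> a <= B * S -> t * S <= c -> 0 < t -> t * a <= c * B.
Proof. move=> *; nra. Qed.

Lemma R2 (R : realType) (a a' B c t b n : R) :
  0 <= a' -> a' = a - b * (2 - b) * c ^+ 2 ->
  a * (1 + n * (b * (2 - b) * t ^+ 2)) <= B ^+ 2 ->
  0 <= t * a -> t * a <= c * B -> 0 <= c -> 0 < B -> 0 < b <= 1 -> 0 <= n ->
  a' * (1 + (n + 1) * (b * (2 - b) * t ^+ 2)) <= (B + b * c) ^+ 2.
Proof.
move=> a'0 ea' hP ta0 tac c0 B0 /andP[b0 b1] n0.
set k := b * (2 - b) * t ^+ 2.
have k0 : 0 <= k by rewrite /k mulr_ge0 ?sqr_ge0 // mulr_ge0 //; lra.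
have bk : 0 <= b * (2 - b) by rewrite mulr_ge0 //; lra.
have aa' : a' <= a by rewrite ea' gerBl mulr_ge0 // sqr_ge0.
have le1 : B ^+ 2 <= (B + b * c) ^+ 2.
  have bc0 : 0 <= b * c by rewrite mulr_ge0 // ltW.
  nra.
apply: le_trans le1.
have [a0|a0] := eqVneq a 0.
  have -> : a' = 0 by apply/eqP; rewrite eq_le a'0 -a0 aa'.
  by rewrite mul0r sqr_ge0.
have apos : 0 < a by rewrite lt_def a0 /=; apply: le_trans aa'.
have h1 : a * (a' * (1 + n * k)) <= a' * B ^+ 2.
  by rewrite mulrCA ler_wpM2l.
have h3 : (t * a) ^+ 2 <= (c * B) ^+ 2 by nra.
have h2 : a' * B ^+ 2 + a' * k * a <= B ^+ 2 * a.
  have : b * (2 - b) * (t * a) ^+ 2 <= b * (2 - b) * (c * B) ^+ 2 by rewrite ler_wpM2l.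
  have d0 : 0 <= a - a' by rewrite subr_ge0.
  have := mulr_ge0 (mulr_ge0 k0 (ltW apos)) d0.
  rewrite ea' /k; nra.
have : a * (a' * (1 + (n + 1) * k)) <= a * B ^+ 2 by nra.
by rewrite ler_pM2l.
Qed.

Lemma R3 (R : realType) (a a' B c t b al : R) :
  0 < a' -> a' = a - b * (2 - b) * c ^+ 2 -> 0 < B -> 0 <= c ->
  t * a <= c * B -> 0 < b <= 1 -> 0 < t -> 0 < al < 1 ->
  al * ((2 - b) * t + 2) <= (2 - b) * t ->
  (1 - al) * ln a' + (2 * al) * ln (B + b * c) <= (1 - al) * ln a + (2 * al) * ln B.
Proof.
move=> a'0 ea' B0 c0 tac /andP[b0 b1] t0 /andP[al0 al1] hal.
have bk : 0 <= b * (2 - b) * c ^+ 2 by rewrite mulr_ge0 ?sqr_ge0 // mulr_ge0 //; lra.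
have apos : 0 < a by lra.
set x := - (b * (2 - b) * c ^+ 2) / a.
have ea : a' = a * (1 + x) by rewrite /x mulrDr mulr1 mulrCA divff ?gt_eqF // mulr1 ea'.
have x1 : -1 < x.
  have : 0 < 1 + x by rewrite -(pmulr_rgt0 _ apos) -ea.
  lra.
set y := b * c / B.
have eb : B + b * c = B * (1 + y) by rewrite /y mulrDr mulr1 mulrCA divff ?gt_eqF // mulr1.
have y0 : 0 <= y by rewrite /y divr_ge0 ?mulr_ge0 // ltW.
have p1 : 0 < 1 + x by lra.
have p2 : 0 < 1 + y by lra.
rewrite ea eb !lnM ?posrE //.
have l1 := le_ln1Dx x1.
have l2 : ln (1 + y) <= y by apply: le_ln1Dx; lra.
suff : (1 - al) * x + (2 * al) * y <= 0.
  have : (1 - al) * ln (1 + x) <= (1 - al) * x by rewrite ler_wpM2l //; lra.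
  have : (2 * al) * ln (1 + y) <= (2 * al) * y by rewrite ler_wpM2l //; lra.
  lra.
have key : 2 * al * a <= (1 - al) * (2 - b) * (c * B).
  have : 2 * al <= (1 - al) * (2 - b) * t by lra.
  have : (1 - al) * (2 - b) * (t * a) <= (1 - al) * (2 - b) * (c * B).
    by rewrite ler_wpM2l // mulr_ge0 //; lra.
  nra.
have : (2 * al * a) * (b * c) <= ((1 - al) * (2 - b) * (c * B)) * (b * c).
  by rewrite ler_wpM2r // mulr_ge0 // ltW.
rewrite /x /y.
have -> : (1 - al) * (- (b * (2 - b) * c ^+ 2) / a) + 2 * al * (b * c / B) =
   ((2 * al * a) * (b * c) - ((1 - al) * (2 - b) * (c * B)) * (b * c)) / (a * B).
  by field; rewrite ?gt_eqF.
move=> h; rewrite pmulr_lle0 ?invr_gt0 ?mulr_gt0 //; lra.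
Qed.

Lemma R4 (R : realType) (r0 rf A B al k : R) :
  0 < r0 -> 0 < rf -> 0 < A -> 0 < B -> 0 <= k -> 0 < al < 1 ->
  r0 ^+ 2 * (1 + k) <= B ^+ 2 ->
  (1 - al) * ln (r0 ^+ 2) + (2 * al) * ln B <= (1 - al) * ln (rf ^+ 2) + (2 * al) * ln A ->
  r0 <= powR rf (1 - al) * powR A al * powR (1 + k) (- (al / 2)).
Proof.
move=> r00 rf0 A0 B0 k0 /andP[al0 al1] h1 h2.
have k1 : 0 < 1 + k by lra.
have : ln (r0 ^+ 2 * (1 + k)) <= ln (B ^+ 2).
  by rewrite ler_ln ?posrE ?mulr_gt0 ?exprn_gt0.
rewrite lnM ?posrE ?exprn_gt0 // !lnXn // => h3.
move: h2; rewrite !lnXn // => h2.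
rewrite /powR !gt_eqF // -!expRD -(lnK (x:=r0)) ?posrE // ler_expR.
have h4 : al * (ln r0 *+ 2 + ln (1 + k)) <= al * (ln B *+ 2) by rewrite ler_wpM2l // ltW.
move: h2 h3 h4; rewrite !mulr2n.
move: (ln r0) (ln rf) (ln A) (ln B) (ln (1 + k)) => L F Al Bl K h2 h3 h4.
have e : al / (1 + 1) = al * 2^-1 by [].
rewrite e; lra.
Qed.


Lemma wga_tele (R : realType) (H : completeNormedModType R) (ip : H -> H -> R)
  b f phi m : f - wga_res ip b f phi m = wga_approx ip b f phi m.
Proof.
elim: m => [|m IH].
  by rewrite /wga_approx /= subrr big_geq // scaler0.
rewrite /wga_approx big_nat_recr //= scalerDr -/(wga_approx ip b f phi m) -IH.
by rewrite scalerA opprB addrA addrAC.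
Qed.

Fixpoint Bs (R : realType) (H : completeNormedModType R) (ip : H -> H -> R)
  b f phi (A : R) j : R :=
  match j with
  | 0 => A
  | j'.+1 => Bs ip b f phi A j' + b * ip (wga_res ip b f phi j') (phi j'.+1)
  end.

Lemma ip_res (R : realType) (H : completeNormedModType R) (ip : H -> H -> R) :
  inner_product ip -> forall h k (p : H), `|p| = 1 ->
  `|h - k *: p| ^+ 2 = `|h| ^+ 2 - 2 * k * ip h p + k ^+ 2.
Proof.
move=> hip h k p p1.
rewrite -(ipnn hip) !(ipBl hip) !(ipBr hip) !(ipZl hip) !(ipZr hip) (ipC hip p h).
rewrite (ipnn hip p) p1 (ipnn hip h); ring.
Qed.

Unset Implicit Arguments.

Theorem theorem2p2 (R : realType) (H : completeNormedModType R) (ip : H -> H -> R)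
    (t b : R) (m : nat) (alpha : R) (D : set H) (f : H) (phi : nat -> H) :
  inner_product ip ->
  0 < t <= 1 -> 0 < b <= 1 -> (1 <= m)%N ->
  0 < alpha <= (2 - b) * t / ((2 - b) * t + 2) ->
  dictionary D -> f != 0 -> (A1norm D f < +oo)%E ->
  wga_realization ip t b D f phi m ->
  `|f - wga_approx ip b f phi m| <=
    `|f| `^ (1 - alpha) * (fine (A1norm D f)) `^ alpha *
    (1 + m%:R * b * (2 - b) * t ^+ 2) `^ (- (alpha / 2)).
Proof.
move=> hip /andP[t0 t1] hb m1 /andP[al0 alle] hD f0 finA hreal.
have [b0 b1] := andP hb.
have [hD1 [_ hDs]] := hD.
set A := fine (A1norm D f).
pose S h := sup [set ip h g | g in D].
have Sub : forall h g, D g -> ip h g <= S h.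
  move=> h g Dg; apply: ub_le_sup; last by exists g.
  exists `|h| => _ [g' Dg' <-].
  by have := ipCS hip h g'; rewrite (hD1 g' Dg') mulr1.
have A1h : forall h, 0 <= A /\ ip h f <= A * S h.
  by move=> h; apply: A1_ub => //; exact: Sub.
have fpos : 0 < `|f| by rewrite normr_gt0.
have Sf : S f <= `|f|.
  have [D0|/set0P [g Dg]] := eqVneq D set0.
    by rewrite /S D0 image_set0 sup0 ltW.
  apply: ge_sup; first by exists (ip f g), g.
  move=> _ [g' Dg' <-].
  by have := ipCS hip f g'; rewrite (hD1 g' Dg') mulr1.
have [A0' Af] := A1h f.
have fA : `|f| <= A.
  move: Af; rewrite (ipnn hip) => Af.
  have : `|f| * `|f| <= `|f| * A by rewrite -expr2; apply: (le_trans Af); rewrite mulrC ler_wpM2r.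
  by rewrite ler_pM2l.
have A0 : 0 < A by apply: lt_le_trans fA.
have p2t : 0 < (2 - b) * t by rewrite mulr_gt0 //; lra.
have hal : alpha * ((2 - b) * t + 2) <= (2 - b) * t.
  by rewrite -ler_pdivlMr //; lra.
have al1 : alpha < 1 by nra.
set k := b * (2 - b) * t ^+ 2.
have Inv : forall j, (j <= m)%N ->
  [/\ 0 < Bs ip b f phi A j,
      (forall h, - ip h (f - wga_res ip b f phi j) <= (Bs ip b f phi A j - A) * S h),
      `|wga_res ip b f phi j| ^+ 2 * (1 + j%:R * k) <= Bs ip b f phi A j ^+ 2 &
      (0 < `|wga_res ip b f phi j| ->
        (1 - alpha) * ln (`|wga_res ip b f phi j| ^+ 2) + (2 * alpha) * ln (Bs ip b f phi A j)
        <= (1 - alpha) * ln (`|f| ^+ 2) + (2 * alpha) * ln A)].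
  elim=> [_|j IH jm].
    split; rewrite /=.
    - exact: A0.
    - by move=> h; rewrite subrr (ip0r hip) oppr0 subrr mul0r.
    - by rewrite mul0r addr0 mulr1 ler_sqr ?nnegrE ?(ltW A0).
    - by move=> _; rewrite /= le_refl.
  have [B0 Inv2 Inv3 Inv4] := IH (ltnW jm).
  have [Dp cS] := hreal j.+1 (andb_true_intro (conj (isT : (1 <= j.+1)%N) jm)).
  rewrite /= in cS Dp.
  set h := wga_res ip b f phi j in Inv2 Inv3 Inv4 cS *.
  set c := ip h (phi j.+1) in cS *.
  set B := Bs ip b f phi A j in B0 Inv2 Inv3 Inv4 *.
  have aBS : `|h| ^+ 2 <= B * S h.
    rewrite -(ipnn hip).
    have -> : ip h h = ip h f - ip h (f - h) by rewrite (ipBr hip) opprB addrCA subrr addr0.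
    have := Inv2 h; have := (A1h h).2; lra.
  have tac : t * `|h| ^+ 2 <= c * B by apply: (R1 B0 _ aBS).
  have ta0 : 0 <= t * `|h| ^+ 2 by rewrite mulr_ge0 // ltW.
  have c0 : 0 <= c by rewrite -(pmulr_lge0 _ B0) (le_trans ta0).
  have bc0 : 0 <= b * c by rewrite mulr_ge0 // ltW.
  have ea' : `|h - (b * c) *: phi j.+1| ^+ 2 = `|h| ^+ 2 - b * (2 - b) * c ^+ 2.
    by rewrite (ip_res hip _ _ (hD1 _ Dp)); rewrite /c; ring.
  have er : wga_res ip b f phi j.+1 = h - (b * c) *: phi j.+1 by [].
  have eB : Bs ip b f phi A j.+1 = B + b * c by [].
  have en : j.+1%:R = j%:R + 1 :> R by rewrite natr1.
  rewrite er eB en.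
  split.
  - by rewrite ltr_wpDr.
  - move=> h'.
    have -> : f - (h - (b * c) *: phi j.+1) = (f - h) + (b * c) *: phi j.+1.
      by rewrite opprB addrA addrAC.
    rewrite (ipDr hip) (ipZr hip).
    have := Inv2 h'.
    have := Sub h' _ (hDs _ Dp); rewrite (ipNr hip) => hS.
    have : (b * c) * - ip h' (phi j.+1) <= (b * c) * S h' by rewrite ler_wpM2l.
    lra.
  - rewrite ea'.
    apply: R2 => //; first by rewrite -ea' sqr_ge0.
  - rewrite ea' => pos.
    have pos' : 0 < `|h| ^+ 2 - b * (2 - b) * c ^+ 2 by rewrite -ea' exprn_gt0.
    have hpos : 0 < `|h|.
      rewrite lt_neqAle normr_ge0 andbT; apply/eqP => h0.
      move: pos'; rewrite -h0 expr0n /= sub0r oppr_gt0 => lt0.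
      have : 0 <= b * (2 - b) * c ^+ 2 by rewrite mulr_ge0 ?sqr_ge0 // mulr_ge0 //; lra.
      lra.
    apply: le_trans (Inv4 hpos).
    by apply: (R3 pos' erefl B0 c0 tac hb t0 _ hal); rewrite al0 al1.
rewrite -wga_tele opprB addrCA subrr addr0.
have [B0 _ I3 I4] := Inv m (leqnn m).
have [r0|r0] := eqVneq `|wga_res ip b f phi m| 0.
  by rewrite r0 mulr_ge0 ?powR_ge0 // mulr_ge0 ?powR_ge0.
have rpos : 0 < `|wga_res ip b f phi m| by rewrite lt_neqAle eq_sym r0 normr_ge0.
have -> : m%:R * b * (2 - b) * t ^+ 2 = m%:R * k by rewrite /k !mulrA.
apply: (R4 rpos fpos A0 B0 _ _ I3 (I4 rpos)).
  by rewrite mulr_ge0 // /k mulr_ge0 ?sqr_ge0 // mulr_ge0 //; lra.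
by rewrite al0 al1.
Qed.
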